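(* Let $R_1\xleftarrow{f}R_{12}\xrightarrow{g}R_2$ be a weakly admissible correspondence in $\mathrm{DGRings}^{0,-1}$. Then: (i) $f$ is surjective; (ii) $\ker f$ is acyclic; (iii) the DG ideal $I\subset R_{12}$ generated by $\ker(R_{12}^{-1}\to R_1^{-1}\times R_2^{-1})$ is acyclic; (iv) the correspondence $R_1\leftarrow R_{12}/I\to R_2$ (with maps induced by $f,g$) is the admissibilization $\mathrm{Adm}$ of the given correspondence.
   Context: Rings are commutative and unital. $\mathrm{DGRings}^{0,-1}$ is the category of commutative DG rings $R$ with $R^i=0$ for $i\ne 0,-1$. Equivalently, such $R$ is a ring $R^0$, an $R^0$-module $R^{-1}$ and an $R^0$-linear $d:R^{-1}\to R^0$ with $d(x)y=d(y)x$. Quasi-isomorphisms are morphisms inducing isomorphisms on $\ker d$ and $\operatorname{coker} d$. A correspondence is a diagram $R_1\xleftarrow{f}R_{12}\xrightarrow{g}R_2$ in $\mathrm{DGRings}^{0,-1}$. Morphisms are maps $h$ of middle terms with $f'h=f$, $g'h=g$. A correspondence is admissible (resp. weakly admissible) if $f$ is a quasi-isomorphism and $R_{12}^{-1}\to R_1^{-1}\times R_2^{-1}$ is an isomorphism (resp. surjective). It is an anamorphism if $f$ is a surjective quasi-isomorphism. Weakly admissible correspondences are anamorphisms. $\mathrm{Adm}$ denotes the left adjoint of the inclusion of admissible correspondences into anamorphisms (from $R_1$ to $R_2$). *)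

(* Defs.v *)
From HB Require Import structures.
From mathcomp Require Import all_boot all_order all_algebra.
Set Implicit Arguments. Unset Strict Implicit. Unset Printing Implicit Defensive.
Import GRing.Theory.
Local Open Scope ring_scope.

(** Commutative DG rings concentrated in degrees 0 and -1:
    a commutative ring R^0, an R^0-module R^{-1}, and an R^0-linear
    d : R^{-1} -> R^0 with d(x) y = d(y) x.  (Zero ring allowed.) *)
Record dgring := DGRing {
  dg0 : comPzRingType;
  dg1 : lmodType dg0;
  dgd : dg1 -> dg0;
  dgd_lin : forall (a : dg0) (x y : dg1), dgd (a *: x + y) = a * dgd x + dgd y;
  dgd_sym : forall x y : dg1, dgd x *: y = dgd y *: x }.

Record dghom (R S : dgring) := DGHom {
  hom0 : {rmorphism dg0 R -> dg0 S};
  hom1 : dg1 R -> dg1 S;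
  hom1_lin : forall (a : dg0 R) (x y : dg1 R),
      hom1 (a *: x + y) = hom0 a *: hom1 x + hom1 y;
  hom_d : forall x : dg1 R, @dgd S (hom1 x) = hom0 (@dgd R x) }.

Definition factors (A B C : dgring) (g : dghom B C) (f : dghom A B)
  (h : dghom A C) : Prop :=
  (forall r, hom0 g (hom0 f r) = hom0 h r) /\
  (forall x, hom1 g (hom1 f x) = hom1 h x).

Definition hom_eq (A B : dgring) (f g : dghom A B) : Prop :=
  (forall r, hom0 f r = hom0 g r) /\ (forall x, hom1 f x = hom1 g x).

(** Quasi-isomorphism: induced maps on ker d and coker d are bijective. *)
Definition quasi_iso (R S : dgring) (f : dghom R S) : Prop :=
  (forall x y : dg1 R, @dgd R x = 0 -> @dgd R y = 0 -> hom1 f x = hom1 f y -> x = y) /\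
  (forall y : dg1 S, @dgd S y = 0 -> exists x : dg1 R, @dgd R x = 0 /\ hom1 f x = y) /\
  (* injective on coker d = R^0 / d(R^{-1}) *)
  (forall r : dg0 R, (exists y : dg1 S, @dgd S y = hom0 f r) ->
      exists x : dg1 R, @dgd R x = r) /\
  (forall s : dg0 S, exists (r : dg0 R) (y : dg1 S), s = hom0 f r + @dgd S y).

Definition surjective_hom (R S : dgring) (f : dghom R S) : Prop :=
  (forall s : dg0 S, exists r, hom0 f r = s) /\
  (forall y : dg1 S, exists x, hom1 f x = y).

Record corr (R1 R2 : dgring) := Corr {
  mid : dgring;
  cf : dghom mid R1;
  cg : dghom mid R2 }.

Definition corr_mor (R1 R2 : dgring) (C C' : corr R1 R2)
  (h : dghom (mid C) (mid C')) : Prop :=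
  factors (cf C') h (cf C) /\ factors (cg C') h (cg C).

(** the map R12^{-1} -> R1^{-1} x R2^{-1} *)
Definition pair_inj (R1 R2 : dgring) (C : corr R1 R2) : Prop :=
  forall x y : dg1 (mid C),
    hom1 (cf C) x = hom1 (cf C) y -> hom1 (cg C) x = hom1 (cg C) y -> x = y.
Definition pair_surj (R1 R2 : dgring) (C : corr R1 R2) : Prop :=
  forall (a : dg1 R1) (b : dg1 R2),
    exists x : dg1 (mid C), hom1 (cf C) x = a /\ hom1 (cg C) x = b.

Definition admissible (R1 R2 : dgring) (C : corr R1 R2) : Prop :=
  quasi_iso (cf C) /\ pair_inj C /\ pair_surj C.

Definition weakly_admissible (R1 R2 : dgring) (C : corr R1 R2) : Prop :=
  quasi_iso (cf C) /\ pair_surj C.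

Definition dg_ideal (R : dgring) (J0 : dg0 R -> Prop) (J1 : dg1 R -> Prop) : Prop :=
  J0 0 /\ (forall a b, J0 a -> J0 b -> J0 (a - b)) /\
  (forall r a, J0 a -> J0 (r * a)) /\
  J1 0 /\ (forall x y, J1 x -> J1 y -> J1 (x - y)) /\
  (forall r x, J1 x -> J1 (r *: x)) /\
  (forall x, J1 x -> J0 (@dgd R x)) /\
  (forall a x, J0 a -> J1 (a *: x)).

Definition gen_ideal0 (R : dgring) (K : dg1 R -> Prop) (r : dg0 R) : Prop :=
  forall J0 J1, dg_ideal J0 J1 -> (forall x, K x -> J1 x) -> J0 r.
Definition gen_ideal1 (R : dgring) (K : dg1 R -> Prop) (x : dg1 R) : Prop :=
  forall J0 J1, dg_ideal J0 J1 -> (forall y, K y -> J1 y) -> J1 x.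

Definition acyclic_sub (R : dgring) (J0 : dg0 R -> Prop) (J1 : dg1 R -> Prop) : Prop :=
  (forall x, J1 x -> @dgd R x = 0 -> x = 0) /\
  (forall r, J0 r -> exists x, J1 x /\ @dgd R x = r).

Definition ker0 (R S : dgring) (f : dghom R S) (r : dg0 R) : Prop := hom0 f r = 0.
Definition ker1 (R S : dgring) (f : dghom R S) (x : dg1 R) : Prop := hom1 f x = 0.

Definition pair_ker (R1 R2 : dgring) (C : corr R1 R2) (x : dg1 (mid C)) : Prop :=
  hom1 (cf C) x = 0 /\ hom1 (cg C) x = 0.
Arguments pair_ker {R1 R2} C x.

(** C' together with eta : C -> C' is Adm(C): C' is admissible, eta is a
    morphism of correspondences, and eta is universal among morphisms from C
    to admissible correspondences (unit of the left adjoint). *)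
Definition is_Adm (R1 R2 : dgring) (C C' : corr R1 R2)
  (eta : dghom (mid C) (mid C')) : Prop :=
  admissible C' /\ corr_mor eta /\
  forall (D : corr R1 R2) (h : dghom (mid C) (mid D)),
    admissible D -> corr_mor h ->
    exists h' : dghom (mid C') (mid D),
      corr_mor h' /\ factors h' eta h /\
      forall h'' : dghom (mid C') (mid D),
        corr_mor h'' -> factors h'' eta h -> hom_eq h'' h'.
Arguments is_Adm {R1 R2} C C' eta.
Arguments corr_mor {R1 R2} C C' h.

(* Main.v *)
Require Import Defs.
From HB Require Import structures.
From mathcomp Require Import all_boot all_order all_algebra.
From Stdlib Require Import ClassicalEpsilon.
Set Implicit Arguments. Unset Strict Implicit. Unset Printing Implicit Defensive.
Import GRing.Theory.
Local Open Scope ring_scope.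

Lemma hom1D (A B : dgring) (f : dghom A B) x y :
  hom1 f (x + y) = hom1 f x + hom1 f y.
Proof. by have := hom1_lin f 1 x y; rewrite scale1r rmorph1 scale1r. Qed.
Lemma hom10 (A B : dgring) (f : dghom A B) : hom1 f 0 = 0.
Proof. apply: (addrI (hom1 f 0)); by rewrite -hom1D !addr0. Qed.
Lemma hom1B (A B : dgring) (f : dghom A B) x y :
  hom1 f (x - y) = hom1 f x - hom1 f y.
Proof. by have := hom1D f (x - y) y; rewrite subrK => ->; rewrite addrK. Qed.
Lemma hom1Z (A B : dgring) (f : dghom A B) a x :
  hom1 f (a *: x) = hom0 f a *: hom1 f x.
Proof. by have := hom1_lin f a x 0; rewrite addr0 hom10 addr0. Qed.
Lemma dgdD (A : dgring) (x y : dg1 A) : dgd (x + y) = dgd x + dgd y.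
Proof. by have := dgd_lin 1 x y; rewrite scale1r mul1r. Qed.
Lemma dgd0 (A : dgring) : dgd (0 : dg1 A) = 0.
Proof. apply: (addrI (dgd (0 : dg1 A))); by rewrite -dgdD !addr0. Qed.
Lemma dgdB (A : dgring) (x y : dg1 A) : dgd (x - y) = dgd x - dgd y.
Proof. by have := @dgdD A (x - y) y; rewrite subrK => ->; rewrite addrK. Qed.
Lemma dgdZ (A : dgring) a (x : dg1 A) : dgd (a *: x) = a * dgd x.
Proof. by have := dgd_lin a x 0; rewrite addr0 dgd0 addr0. Qed.

Definition lift0 (A Q : dgring) (pi : dghom A Q) (Hs : surjective_hom pi)
  (q : dg0 Q) : dg0 A := proj1_sig (constructive_indefinite_description _ (proj1 Hs q)).
Lemma lift0K (A Q : dgring) (pi : dghom A Q) (Hs : surjective_hom pi) q :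
  hom0 pi (lift0 Hs q) = q.
Proof. exact: proj2_sig (constructive_indefinite_description _ (proj1 Hs q)). Qed.
Definition lift1 (A Q : dgring) (pi : dghom A Q) (Hs : surjective_hom pi)
  (q : dg1 Q) : dg1 A := proj1_sig (constructive_indefinite_description _ (proj2 Hs q)).
Lemma lift1K (A Q : dgring) (pi : dghom A Q) (Hs : surjective_hom pi) q :
  hom1 pi (lift1 Hs q) = q.
Proof. exact: proj2_sig (constructive_indefinite_description _ (proj2 Hs q)). Qed.

Definition fh0 (A Q D : dgring) (pi : dghom A Q) (h : dghom A D)
  (Hs : surjective_hom pi) (q : dg0 Q) : dg0 D := hom0 h (lift0 Hs q).
Definition fh1 (A Q D : dgring) (pi : dghom A Q) (h : dghom A D)
  (Hs : surjective_hom pi) (q : dg1 Q) : dg1 D := hom1 h (lift1 Hs q).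

Lemma fh0_eq (A Q D : dgring) (pi : dghom A Q) (h : dghom A D)
  (Hs : surjective_hom pi) (Hk0 : forall r, hom0 pi r = 0 -> hom0 h r = 0) r q :
  hom0 pi r = q -> fh0 h Hs q = hom0 h r.
Proof.
move=> E; rewrite /fh0; apply/eqP; rewrite -subr_eq0 -rmorphB; apply/eqP/Hk0.
by rewrite rmorphB lift0K E subrr.
Qed.
Lemma fh1_eq (A Q D : dgring) (pi : dghom A Q) (h : dghom A D)
  (Hs : surjective_hom pi) (Hk1 : forall x, hom1 pi x = 0 -> hom1 h x = 0) x q :
  hom1 pi x = q -> fh1 h Hs q = hom1 h x.
Proof.
move=> E; rewrite /fh1; apply/eqP; rewrite -subr_eq0 -hom1B; apply/eqP/Hk1.
by rewrite hom1B lift1K E subrr.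
Qed.

Lemma fh0_zmod (A Q D : dgring) (pi : dghom A Q) (h : dghom A D)
  (Hs : surjective_hom pi) (Hk0 : forall r, hom0 pi r = 0 -> hom0 h r = 0) :
  GRing.zmod_morphism (fh0 h Hs).
Proof.
move=> x y; rewrite (@fh0_eq _ _ _ _ _ _ Hk0 (lift0 Hs x - lift0 Hs y)).
  by rewrite rmorphB.
by rewrite rmorphB !lift0K.
Qed.
Lemma fh0_mon (A Q D : dgring) (pi : dghom A Q) (h : dghom A D)
  (Hs : surjective_hom pi) (Hk0 : forall r, hom0 pi r = 0 -> hom0 h r = 0) :
  GRing.monoid_morphism (fh0 h Hs).
Proof.
constructor.
  by rewrite (@fh0_eq _ _ _ _ _ _ Hk0 1) ?rmorph1.
move=> x y; rewrite (@fh0_eq _ _ _ _ _ _ Hk0 (lift0 Hs x * lift0 Hs y)).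
  by rewrite rmorphM.
by rewrite rmorphM !lift0K.
Qed.

Definition fhom0 (A Q D : dgring) (pi : dghom A Q) (h : dghom A D)
  (Hs : surjective_hom pi) (Hk0 : forall r, hom0 pi r = 0 -> hom0 h r = 0) :
  {rmorphism dg0 Q -> dg0 D} :=
  HB.pack (fh0 h Hs)
   (GRing.isZmodMorphism.Build _ _ (fh0 h Hs) (@fh0_zmod _ _ _ pi h Hs Hk0))
   (GRing.isMonoidMorphism.Build _ _ (fh0 h Hs) (@fh0_mon _ _ _ pi h Hs Hk0)).

Definition fhom (A Q D : dgring) (pi : dghom A Q) (h : dghom A D)
  (Hs : surjective_hom pi) (Hk0 : forall r, hom0 pi r = 0 -> hom0 h r = 0)
  (Hk1 : forall x, hom1 pi x = 0 -> hom1 h x = 0) : dghom Q D.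
refine (@DGHom Q D (@fhom0 _ _ _ pi h Hs Hk0) (fh1 h Hs) _ _).
- move=> a x y; rewrite (@fh1_eq _ _ _ _ _ _ Hk1 (lift0 Hs a *: lift1 Hs x + lift1 Hs y)).
    by rewrite hom1_lin.
  by rewrite hom1_lin lift0K !lift1K.
- move=> x; rewrite /= /fh1 hom_d; symmetry; apply: fh0_eq => //.
  by rewrite -hom_d lift1K.
Defined.

Lemma fhom_fac (A Q D : dgring) (pi : dghom A Q) (h : dghom A D)
  (Hs : surjective_hom pi) (Hk0 : forall r, hom0 pi r = 0 -> hom0 h r = 0)
  (Hk1 : forall x, hom1 pi x = 0 -> hom1 h x = 0) :
  factors (@fhom _ _ _ pi h Hs Hk0 Hk1) pi h.
Proof. split=> r /=; [exact: fh0_eq | exact: fh1_eq]. Qed.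

Lemma K_ideal (R1 R2 : dgring) (C : corr R1 R2) :
  dg_ideal (fun r => exists k, pair_ker C k /\ dgd k = r) (pair_ker C).
Proof.
rewrite /pair_ker; split; [|split; [|split; [|split; [|split; [|split; [|split]]]]]].
- by exists 0; rewrite !hom10 dgd0; do !split.
- move=> a b [k1 [[h1 h2] <-]] [k2 [[h3 h4] <-]].
  exists (k1 - k2).
  by rewrite !hom1B h1 h2 h3 h4 !subrr dgdB; do !split.
- move=> r a [k [[h1 h2] <-]]; exists (r *: k).
  by rewrite !hom1Z h1 h2 !scaler0 dgdZ; do !split.
- by rewrite !hom10; do !split.
- by move=> x y [h1 h2] [h3 h4]; rewrite !hom1B h1 h2 h3 h4 !subrr; do !split.
- by move=> r x [h1 h2]; rewrite !hom1Z h1 h2 !scaler0; do !split.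
- by move=> x hx; exists x.
- move=> a x [k [[h1 h2] <-]]; rewrite dgd_sym.
  by rewrite !hom1Z h1 h2 !scaler0; do !split.
Qed.

Lemma genK0 (R1 R2 : dgring) (C : corr R1 R2) r :
  gen_ideal0 (pair_ker C) r <-> exists k, pair_ker C k /\ dgd k = r.
Proof.
split.
  by move=> H; apply: (H _ _ (K_ideal C)).
move=> [k [hk <-]] J0 J1 HJ HK.
by case: HJ => _ [_ [_ [_ [_ [_ [H _]]]]]]; apply: H; apply: HK.
Qed.

Lemma genK1 (R1 R2 : dgring) (C : corr R1 R2) x :
  gen_ideal1 (pair_ker C) x <-> pair_ker C x.
Proof.
split.
  by move=> H; apply: (H _ _ (K_ideal C)).
by move=> hx J0 J1 HJ HK; apply: HK.
Qed.

Theorem lemma4p3p3 (R1 R2 : dgring) (C : corr R1 R2) :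
  weakly_admissible C ->
  (* (i) f is surjective *)
  surjective_hom (cf C) /\
  (* (ii) ker f is acyclic *)
  acyclic_sub (ker0 (cf C)) (ker1 (cf C)) /\
  (* (iii) the DG ideal I generated by ker(R12^{-1} -> R1^{-1} x R2^{-1}) is acyclic *)
  acyclic_sub (gen_ideal0 (pair_ker C)) (gen_ideal1 (pair_ker C)) /\
  (* (iv) R1 <- R12/I -> R2 is Adm of C; R12/I is given by any surjection
     pi : R12 -> Q with kernel exactly I, and f', g' the induced maps *)
  (forall (Q : dgring) (pi : dghom (mid C) Q)
          (f' : dghom Q R1) (g' : dghom Q R2),
     surjective_hom pi ->
     (forall r, hom0 pi r = 0 <-> gen_ideal0 (pair_ker C) r) ->
     (forall x, hom1 pi x = 0 <-> gen_ideal1 (pair_ker C) x) ->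
     factors f' pi (cf C) -> factors g' pi (cg C) ->
     is_Adm C (Corr f' g') pi).
Proof.
case=> [[qi1 [qi2 [qi3 qi4]]] ps].
have Hi : surjective_hom (cf C).
  split.
    move=> s; have [r [y ->]] := qi4 s.
    have [x [hx _]] := ps y 0.
    by exists (r + dgd x); rewrite rmorphD -hom_d hx.
  by move=> y; have [x [hx _]] := ps y 0; exists x.
have Hii : acyclic_sub (ker0 (cf C)) (ker1 (cf C)).
  split.
    move=> x hx dx; apply: qi1 => //; first exact: dgd0.
    by rewrite hx hom10.
  move=> r hr.
  have [x' dx'] : exists x', dgd x' = r.
    by apply: qi3; exists 0; rewrite dgd0; symmetry; exact: hr.
  have [x'' [dx'' fx'']] : exists x'', dgd x'' = 0 /\ hom1 (cf C) x'' = hom1 (cf C) x'.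
    by apply: qi2; rewrite hom_d dx'; exact: hr.
  exists (x' - x''); split.
    by rewrite /ker1 hom1B fx'' subrr.
  by rewrite dgdB dx'' subr0.
split => //; split => //; split.
  split.
    move=> x /genK1 [h1 h2] dx; exact: (proj1 Hii x h1 dx).
  move=> r /genK0 [k [hk <-]]; exists k; split => //; exact/genK1.
move=> Q pi f' g' Hs Hk0 Hk1 [ff0 ff1] [gg0 gg1].
have Hk0' : forall r, hom0 pi r = 0 -> exists k, pair_ker C k /\ dgd k = r.
  by move=> r /Hk0 /genK0.
have Hk1' : forall x, hom1 pi x = 0 <-> pair_ker C x.
  by move=> x; rewrite Hk1 genK1.
have piK : forall k, pair_ker C k -> hom1 pi k = 0 by move=> k /Hk1'.
split; last split.
-
  split; [split; [|split; [|split]]|split].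
  + move=> q1 q2.
    have [x1 <-] := proj2 Hs q1; have [x2 <-] := proj2 Hs q2.
    rewrite /= !hom_d => /Hk0' [k1 [hk1 e1]] /Hk0' [k2 [hk2 e2]] e.
    have -> : hom1 pi x1 = hom1 pi (x1 - k1) by rewrite hom1B (piK _ hk1) subr0.
    have -> : hom1 pi x2 = hom1 pi (x2 - k2) by rewrite hom1B (piK _ hk2) subr0.
    congr (hom1 pi _).
    apply: qi1; rewrite ?dgdB ?e1 ?e2 ?subrr //.
    by rewrite !hom1B (proj1 hk1) (proj1 hk2) -!ff1 e.
  + move=> y dy; have [x [dx <-]] := qi2 y dy.
    by exists (hom1 pi x); rewrite hom_d dx rmorph0 ff1.
  + move=> q [y ey]; have [r er] := proj1 Hs q.
    move: ey; rewrite -er ff0 => ey.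
    have [x dx] : exists x, dgd x = r by apply: qi3; exists y.
    by exists (hom1 pi x); rewrite hom_d dx.
  + move=> s; have [r [y ->]] := qi4 s.
    by exists (hom0 pi r), y; rewrite ff0.
  + move=> q1 q2.
    have [x1 <-] := proj2 Hs q1; have [x2 <-] := proj2 Hs q2.
    rewrite /= !ff1 !gg1 => e1 e2.
    apply/eqP; rewrite -subr_eq0 -hom1B; apply/eqP/piK.
    by rewrite /pair_ker !hom1B e1 e2 !subrr.
  + move=> a b; have [x [ea eb]] := ps a b.
    by exists (hom1 pi x); rewrite /= ff1 gg1.
- by split; split.
- move=> D h [Dqi [Dpi Dps]] [[hf0 hf1] [hg0 hg1]].
  have hK1 : forall x, hom1 pi x = 0 -> hom1 h x = 0.
    move=> x /Hk1' [e1 e2]; apply: Dpi.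
      by rewrite hf1 e1 hom10.
    by rewrite hg1 e2 hom10.
  have hK0 : forall r, hom0 pi r = 0 -> hom0 h r = 0.
    move=> r /Hk0' [k [hk <-]]; rewrite -hom_d hK1 ?dgd0 //; exact: piK.
  exists (@fhom _ _ _ pi h Hs hK0 hK1).
  have [fac0 fac1] := @fhom_fac _ _ _ pi h Hs hK0 hK1.
  split; last split.
  + split; split => q.
    * have [r <-] := proj1 Hs q; by rewrite fac0 hf0 -ff0.
    * have [r <-] := proj2 Hs q; by rewrite fac1 hf1 -ff1.
    * have [r <-] := proj1 Hs q; by rewrite fac0 hg0 -gg0.
    * have [r <-] := proj2 Hs q; by rewrite fac1 hg1 -gg1.
  + by split.
  + move=> h'' _ [e0 e1]; split => q.
      have [r <-] := proj1 Hs q; by rewrite e0 fac0.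
    have [r <-] := proj2 Hs q; by rewrite e1 fac1.
Qed.
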